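(* Let $j\geq1$ be an integer and $0<e<1$. Let $n$ be a positive integer with $h_j(n)>n^{-e}$. Then for every prime $p$ and integer $m\geq1$ with $p^m\parallel n$ we have $h_j(p^m)\geq \frac{1}{M_{j,e}\,(p^m)^e}$. In particular, the set $\{n\in\mathbb{N}: h_j(n)>n^{-e}\}$ is finite.
   Context: $\sigma(n)=\sum_{d\mid n}d$. For an integer $j\geq1$, a prime $p$ and $m\geq1$, put $h_j(p^m)=\sum_{k=1}^{j}\binom{j}{k}\big(p\,\sigma(p^{m-1})\big)^{-k}$, set $h_j(1)=1$, and extend $h_j$ to all positive integers multiplicatively: $h_j(n)=\prod_{p^m\parallel n}h_j(p^m)$. For $0<e<1$ let $M_{j,e}=\max_{n\in\mathbb{Z}_{\geq1}}h_j(n)\,n^{e}$ (this maximum exists and satisfies $M_{j,e}\geq1$). *)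

(* Defs.v *)
From HB Require Import structures.
From mathcomp Require Import all_boot all_order all_algebra.
From mathcomp Require Import all_classical all_reals all_analysis.
Unset Printing Implicit Defensive.
Import Order.TTheory GRing.Theory Num.Theory.
Local Open Scope ring_scope.

Definition sigma (n : nat) : nat := (\sum_(d <- divisors n) d)%N.

Definition hpp (R : realType) (j p m : nat) : R :=
  \sum_(1 <= k < j.+1) ('C(j, k))%:R * (((p * sigma (p ^ m.-1))%N)%:R) ^- k.

Definition h (R : realType) (j n : nat) : R :=
  \prod_(p <- primes n) hpp R j p (logn p n).

(* M is M_{j,e} = max_{n >= 1} h_j(n) n^e : attained at some n0 >= 1 and an
   upper bound of all values. *)
Definition is_Mje (R : realType) (j : nat) (e M : R) : Prop :=
  (exists2 n0 : nat, (0 < n0)%N & M = h R j n0 * (n0%:R `^ e)) /\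
  (forall n : nat, (0 < n)%N -> h R j n * (n%:R `^ e) <= M).

(* Main.v *)
Require Import Defs.
From HB Require Import structures.
From mathcomp Require Import all_boot all_order all_algebra.
From mathcomp Require Import all_classical all_reals all_analysis.
From mathcomp Require Import ring lra.
Import Order.TTheory GRing.Theory Num.Theory.
Local Open Scope ring_scope.
Local Open Scope classical_set_scope.

Lemma sigma_ge n : (0 < n)%N -> (n <= sigma n)%N.
Proof.
move=> n0; rewrite /sigma (bigD1_seq n) ?divisors_uniq ?divisors_id //=.
exact: leq_addr.
Qed.

Lemma hpp_ge0 (R : realType) j p m : 0 <= hpp R j p m.
Proof.
rewrite /hpp; apply: sumr_ge0 => k _; by apply: mulr_ge0 => //; rewrite invr_ge0 exprn_ge0.
Qed.

Lemma h1 (R : realType) j : h R j 1 = 1.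
Proof. by rewrite /h big_nil. Qed.

Lemma h_split (R : realType) j n p : (0 < n)%N -> p \in primes n ->
  h R j n = hpp R j p (logn p n) * h R j (n`_(negn p)).
Proof.
move=> n0 pn; have pp : prime p by move: pn; rewrite mem_primes => /andP[].
rewrite /h (bigD1_seq p) ?primes_uniq //=; congr (_ * _).
rewrite primes_part big_filter; apply: eq_bigr => q qp.
congr hpp.
have := partnC p n0; rewrite p_part => E.
rewrite -{1}E lognM ?part_gt0 ?expn_gt0 ?prime_gt0 // lognX (logn_prime q pp) (negbTE qp) muln0.
done.
Qed.

Lemma hpp_le (R : realType) j p m : prime p -> (1 <= m)%N ->
  hpp R j p m <= (\sum_(1 <= k < j.+1) 'C(j, k))%N%:R / ((p ^ m)%N)%:R.
Proof.
move=> pp m1; rewrite /hpp natr_sum mulr_suml; apply: ler_sum_nat => k /andP[k1 _].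
apply: ler_wpM2l => //.
set q := (p * sigma (p ^ m.-1))%N.
have Pq : (p ^ m <= q)%N.
  rewrite /q; clear q; case: m m1 => // m' _ /=; rewrite expnS leq_mul2l.
  by rewrite sigma_ge ?orbT // expn_gt0 prime_gt0.
have P0 : (0 < p ^ m)%N by rewrite expn_gt0 prime_gt0.
have qk : (p ^ m <= q ^ k)%N.
  case: k k1 => // k' _; rewrite expnS; apply: (leq_trans Pq); apply: leq_pmulr.
  by rewrite expn_gt0 (leq_trans P0 Pq).
rewrite -natrX; rewrite lef_pV2 ?posrE ?ltr0n ?(leq_trans P0 qk) //.
by rewrite ler_nat.
Qed.

Lemma core1 (R : realType) (a b M H hr : R) : 0 < a -> 0 < b -> 0 < M ->
  0 <= H -> hr * b <= M -> (a * b)^-1 < H * hr -> (M * a)^-1 <= H.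
Proof.
move=> a0 b0 M0 H0 hb lt; apply: ltW.
have ab0 : 0 < a * b by apply: mulr_gt0.
rewrite -[(a * b)^-1]mul1r ltr_pdivrMr // in lt.
rewrite -[(M * a)^-1]mul1r ltr_pdivrMr ?mulr_gt0 //.
have := ler_wpM2r (mulr_ge0 H0 (ltW a0)) hb.
nra.
Qed.

Lemma core2 (R : realType) (e M D P : R) : 1 <= M -> 0 < e -> e < 1 -> 1 <= P ->
  (M * P `^ e)^-1 <= D / P -> P <= (D * M) `^ (1 - e)^-1.
Proof.
move=> M1 e0 e1 P1 le.
set X := P `^ e.
have X0 : 0 < X by apply: powR_gt0; lra.
have P0 : 0 < P by lra.
rewrite -[(M * X)^-1]mul1r ler_pdivrMr ?mulr_gt0 // in le; last lra.
have le2 : P <= D * M * X.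
  have := ler_wpM2l (ltW P0) le.
  have -> : P * (D / P * (M * X)) = D * M * X by field; rewrite gt_eqF.
  by rewrite mulr1.
have le3 : P `^ (1 - e) <= D * M.
  rewrite powRD; last by apply/implyP => _; rewrite gt_eqF.
  rewrite powRr1; last lra.
  rewrite powRN -/X; rewrite ler_pdivrMr //.
have DM0 : 0 <= D * M.
  apply: le_trans le3; exact: powR_ge0.
have := ge0_ler_powR (r := (1 - e)^-1) _ _ _ le3.
rewrite -powRrM mulfV ?powRr1; last lra; last lra.
apply; first by rewrite invr_ge0; lra.
  by rewrite nnegrE powR_ge0.
by rewrite nnegrE.
Qed.

Lemma M_ge1 (R : realType) j e M : is_Mje R j e M -> 1 <= M.
Proof. by move=> [_ H]; have := H 1%N isT; rewrite h1 powR1 mulr1. Qed.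

Theorem lemma5p2 (R : realType) (j : nat) (e M : R)
  (hj : (1 <= j)%N) (he0 : 0 < e) (he1 : e < 1) (hM : is_Mje R j e M) :
  (forall n : nat, (0 < n)%N -> n%:R `^ (- e) < h R j n ->
     forall p m : nat, prime p -> (1 <= m)%N -> logn p n = m ->
       (M * ((p ^ m)%N)%:R `^ e)^-1 <= hpp R j p m)
  /\ finite_set [set n : nat | (0 < n)%N /\ n%:R `^ (- e) < h R j n].
Proof.
have M1 := M_ge1 _ _ _ _ hM.
have P1 : forall n : nat, (0 < n)%N -> n%:R `^ (- e) < h R j n ->
     forall p m : nat, prime p -> (1 <= m)%N -> logn p n = m ->
       (M * ((p ^ m)%N)%:R `^ e)^-1 <= hpp R j p m.
  move=> n n0 lt p m pp m1 hm.
  have pn : p \in primes n by rewrite -logn_gt0 hm.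
  rewrite (h_split R j n p n0 pn) hm in lt.
  have r0 : (0 < n`_(negn p))%N by exact: part_gt0.
  have nE : n = (p ^ m * n`_(negn p))%N by rewrite -hm -p_part partnC.
  rewrite [in X in X `^ _]nE natrM powRN powRM // in lt.
  apply: (core1 R _ ((n`_(negn p))%:R `^ e) M _ (h R j n`_(negn p))) => //.
  - by apply: powR_gt0; rewrite ltr0n expn_gt0 prime_gt0.
  - by apply: powR_gt0; rewrite ltr0n.
  - lra.
  - exact: hpp_ge0.
  - exact: hM.2.
split => //.
set D := (\sum_(1 <= k < j.+1) 'C(j, k))%N.
set K := Num.truncn ((D%:R * M) `^ (1 - e)^-1).
apply: (sub_finite_set _ (finite_II (K`!).+1)).
move=> n [n0 lt] /=.
rewrite ltnS; apply: dvdn_leq; first exact: fact_gt0.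
apply/dvdn_partP => // p.
rewrite /= => pn.
have pp : prime p by move: pn; rewrite mem_primes => /andP[].
have m1 : (1 <= logn p n)%N by rewrite logn_gt0.
rewrite p_part; apply: dvdn_fact; rewrite expn_gt0 prime_gt0 //=.
rewrite truncn_ge_nat; last exact: powR_ge0.
apply: (core2 R e M) => //.
  by rewrite ler1n expn_gt0 prime_gt0.
apply: le_trans (hpp_le R j p _ pp m1).
exact: (P1 n n0 lt p _ pp m1 erefl).
Qed.
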